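(* Let $r\geq 2$ and let $X$ be a rose with $r$ petals, with $F\cong\pi_1(X,x_0)$ the free group on the generators $\alpha_1,\ldots,\alpha_r$ corresponding to the oriented petals. Let $Z$ be a finite, non-empty, connected graph and let $Z\to X$ be an immersion that is not a covering map. Then the immersion factors as $Z\hookrightarrow Y\to X$, where $Z$ is a subgraph of $Y$, $Y$ is a finite connected graph, $Y\to X$ is a finite-sheeted (combinatorial) covering map, and the image of the resulting homomorphism $F\to\mathrm{Sym}(V(Y))$ (given by the action of $F$ on the vertex set $V(Y)$ of $Y$ by path lifting) is exactly the alternating group $\mathrm{Alt}(V(Y))$.
   Context: A rose with $r$ petals is a graph with exactly one vertex $x_0$ and $r$ edges; each edge is oriented and labelled by a generator $\alpha_i$, giving $\pi_1(X,x_0)\cong F$ free on $\alpha_1,\dots,\alpha_r$. A combinatorial map of graphs $Y\to X$ (sending vertices to vertices and edges to edges) is equivalent to an orientation and labelling of the edges of $Y$ by $\alpha_1,\ldots,\alpha_r$. It is an immersion if it is injective on links of vertices, equivalently if at every vertex of $Y$ and for every label $\alpha_i$ there is at most one incoming and at most one outgoing edge labelled $\alpha_i$; it is a covering map if it is bijective on links of vertices, equivalently if at every vertex there is exactly one incoming and exactly one outgoing edge labelled $\alpha_i$ for each $i$. For a covering $Y\to X$, $F$ acts on the vertices of $Y$ by path lifting: for a vertex $y$ and $\gamma\in F$ viewed as a loop at $x_0$, $\gamma.y$ is the endpoint of the unique lift of $\gamma$ starting at $y$; concretely, $\alpha_i$ sends $u$ to $v$ when there is an edge labelled $\alpha_i$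 oriented from $u$ to $v$. *)

(* Defs.v *)
From mathcomp Require Import all_boot all_fingroup all_solvable.
Set Implicit Arguments. Unset Strict Implicit. Unset Printing Implicit Defensive.


(* A finite graph over the rose with r petals: a combinatorial map to the rose
   is the same as an orientation (src/tgt) and a labelling of the edges by
   the generators alpha_0, ..., alpha_(r-1) (indexed by 'I_r). *)
Record lgraph (r : nat) := LGraph {
  vert : finType;
  edge : finType;
  src : edge -> vert;
  tgt : edge -> vert;
  lab : edge -> 'I_r }.

Section LGraphDefs.
Variable r : nat.
Variable G : lgraph r.

Definition out_edges (v : vert G) (i : 'I_r) : {set edge G} :=
  [set e | (src e == v) && (lab e == i)].
Definition in_edges (v : vert G) (i : 'I_r) : {set edge G} :=
  [set e | (tgt e == v) && (lab e == i)].

(* Immersion: injective on links, i.e. at most one incoming and one outgoing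
   edge with each label at each vertex. *)
Definition immersion : Prop :=
  forall v i, #|out_edges v i| <= 1 /\ #|in_edges v i| <= 1.

(* Covering map: bijective on links. *)
Definition covering : Prop :=
  forall v i, #|out_edges v i| = 1 /\ #|in_edges v i| = 1.

Definition adj : rel (vert G) :=
  fun u v => [exists e : edge G,
    ((src e == u) && (tgt e == v)) || ((src e == v) && (tgt e == u))].
Definition connected : Prop := forall u v : vert G, connect adj u v.

(* sigma i is the permutation of vertices induced by the generator alpha_i
   (path lifting): alpha_i sends u to v when an edge labelled alpha_i goes
   from u to v.  For a covering such sigma exists and is unique. *)
Definition lifts (sigma : 'I_r -> {perm vert G}) : Prop :=
  forall e : edge G, sigma (lab e) (src e) = tgt e.

(* Image of F -> Sym(V(G)): the subgroup generated by the images of the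
   generators. *)
Definition monodromy (sigma : 'I_r -> {perm vert G}) : {set {perm vert G}} :=
  <<[set sigma i | i : 'I_r]>>%g.
End LGraphDefs.

Definition subgraph_embedding (r : nat) (Z Y : lgraph r)
  (fV : vert Z -> vert Y) (fE : edge Z -> edge Y) : Prop :=
  [/\ injective fV, injective fE,
      forall e, src (fE e) = fV (src e),
      forall e, tgt (fE e) = fV (tgt e)
    & forall e, lab (fE e) = lab e].

(* Main.v *)
Require Import Defs.
From mathcomp Require Import all_boot all_fingroup all_solvable.
From Stdlib Require Import Lia.
Set Implicit Arguments. Unset Strict Implicit. Unset Printing Implicit Defensive.
Import GroupScope.

Ltac eqbash := repeat (match goal with
  | |- context [?a == ?b] => is_var a; is_var b; case: (a =P b) => /= [?|?]; subst
  end); try congruence.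

Section ThreeCycles.
Variable T : finType.

Definition c3 (x y z : T) : {perm T} := tperm x y * tperm x z.

Lemma tpermE' (x y v : T) : tperm x y v = if v == x then y else if v == y then x else v.
Proof. by case: tpermP => [->|->|/eqP/negbTE-> /eqP/negbTE->]; rewrite ?eqxx //; case: eqP. Qed.

Lemma c3E x y z v : x != y -> y != z -> x != z ->
  c3 x y z v = if v == x then y else if v == y then z else if v == z then x else v.
Proof. move=> /eqP xy /eqP yz /eqP xz; rewrite /c3 permM !tpermE'; eqbash. Qed.

Lemma c3_rot x y z : x != y -> y != z -> x != z -> c3 x y z = c3 y z x.
Proof.
move=> /eqP xy /eqP yz /eqP xz; apply/permP => v.
rewrite !c3E; try (apply/eqP; congruence); eqbash.
Qed.

Lemma c3_inv x y z : x != y -> y != z -> x != z -> (c3 x y z)^-1 = c3 y x z.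
Proof.
move=> xy yz xz; apply: (mulgI (c3 x y z)); rewrite mulgV; apply/permP => v.
move: xy yz xz => /eqP xy /eqP yz /eqP xz.
rewrite permM perm1 !c3E; try (apply/eqP; congruence); eqbash.
Qed.

Lemma c3J x y z g : (c3 x y z) ^ g = c3 (g x) (g y) (g z).
Proof. by rewrite /c3 conjMg !tpermJ. Qed.

Lemma c3_L p q c z : p != q -> p != c -> p != z -> q != c -> q != z -> c != z ->
  (c3 p q c)^-1 * c3 p q z = c3 p c z.
Proof.
move=> pq pc pz qc qz cz; rewrite c3_inv //; apply/permP => v.
move: pq pc pz qc qz cz => /eqP ? /eqP ? /eqP ? /eqP ? /eqP ? /eqP ?.
rewrite permM !c3E; try (apply/eqP; congruence); eqbash.
Qed.

End ThreeCycles.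

Section CS.
Variable T : finType.
Variable G : {group {perm T}}.

Definition CSb (S : {set T}) : bool :=
  [forall x in S, forall y in S, forall z in S,
     [&& x != y, y != z & x != z] ==> (c3 x y z \in G)].

Lemma CSbP (S : {set T}) : reflect (forall x y z, x \in S -> y \in S -> z \in S ->
   x != y -> y != z -> x != z -> c3 x y z \in G) (CSb S).
Proof.
apply: (iffP idP) => [H x y z xS yS zS xy yz xz | H].
  move/forall_inP: H => /(_ x xS)/forall_inP/(_ y yS)/forall_inP/(_ z zS).
  by rewrite xy yz xz; apply.
apply/forall_inP => x xS; apply/forall_inP => y yS; apply/forall_inP => z zS.
by apply/implyP => /and3P[]; apply: H.
Qed.

Lemma eq_sym' (a b : T) : a != b -> b != a.
Proof. by rewrite eq_sym. Qed.

Lemma Tm_rot x y z : x != y -> y != z -> x != z -> c3 x y z \in G -> c3 y z x \in G.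
Proof. by move=> xy yz xz; rewrite c3_rot. Qed.

Lemma Tm_swap x y z : x != y -> y != z -> x != z -> c3 x y z \in G -> c3 y x z \in G.
Proof. by move=> xy yz xz H; rewrite -(c3_inv xy yz xz) groupV. Qed.

Lemma Tm_L p q c z : p != q -> p != c -> p != z -> q != c -> q != z -> c != z ->
  c3 p q c \in G -> c3 p q z \in G -> c3 p c z \in G.
Proof. by move=> pq pc pz qc qz cz H1 H2; rewrite -(c3_L pq pc pz qc qz cz) groupM ?groupV. Qed.

Lemma CS_core (S : {set T}) x y z : CSb S -> x \in S -> y \in S -> x != y -> x != z -> y != z ->
  c3 x y z \in G -> forall a b, a \in S -> b \in S -> a != b -> a != z -> b != z ->
  c3 a b z \in G.
Proof.
move=> /CSbP H xS yS xy xz yz Hxyz.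
have stepA: forall b, b \in S -> b != x -> b != z -> c3 x b z \in G.
  move=> b bS bx bz; case: (eqVneq b y) => [->//|bny].
  apply: (Tm_L (q := y)) => //; try by rewrite eq_sym.
  by apply: H => //; rewrite eq_sym.
move=> a b aS bS ab az bz.
case: (eqVneq a x) => [eax|ax]; first by subst a; apply: stepA => //; rewrite eq_sym.
case: (eqVneq b x) => [ebx|bx].
  by subst b; apply: Tm_swap => //; [rewrite eq_sym| apply: stepA].
apply: (Tm_L (q := x)) => //; try by rewrite eq_sym.
- by apply: H => //; rewrite eq_sym.
- by apply: Tm_swap => //; [rewrite eq_sym | apply: stepA].
Qed.

Lemma CS_add (S : {set T}) x y z : CSb S -> x \in S -> y \in S -> x != y -> x != z -> y != z ->
  c3 x y z \in G -> CSb (z |: S).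
Proof.
move=> HS xS yS xy xz yz Hxyz.
have core := CS_core HS xS yS xy xz yz Hxyz.
apply/CSbP => a b c aS bS cS ab bc ac.
have mS : forall v, v \in z |: S -> v != z -> v \in S.
  by move=> v; rewrite in_setU1 => /orP[/eqP->|//]; rewrite eqxx.
case: (eqVneq a z) => [eaz|az].
  subst a; have bS' := mS b bS (eq_sym' ab); have cS' := mS c cS (eq_sym' ac).
  have h := core b c bS' cS' bc (eq_sym' ab) (eq_sym' ac).
  apply: (@Tm_rot c z b (eq_sym' ac) ab (eq_sym' bc)).
  exact: (@Tm_rot b c z bc (eq_sym' ac) (eq_sym' ab) h).
case: (eqVneq b z) => [ebz|bz].
  subst b; have aS' := mS a aS az; have cS' := mS c cS (eq_sym' bc).
  have h := core c a cS' aS' (eq_sym' ac) (eq_sym' bc) az.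
  exact: (@Tm_rot c a z (eq_sym' ac) az (eq_sym' bc) h).
case: (eqVneq c z) => [ecz|cz].
  by subst c; apply: core => //; apply: mS.
by apply: (elimT (CSbP S) HS) => //; apply: mS.
Qed.

Lemma CS_union (S S' : {set T}) x y : CSb S -> CSb S' -> x \in S :&: S' -> y \in S :&: S' -> x != y ->
  CSb (S :|: S').
Proof.
move=> HS HS'; rewrite !inE => /andP[xS xS'] /andP[yS yS'] xy.
suff: forall l, all (fun v => v \in S') l -> CSb (S :|: [set v in l]).
  move=> /(_ (enum S')).
  have -> : [set v in enum S'] = S' by apply/setP => v; rewrite !inE mem_enum.
  by apply; apply/allP => v; rewrite mem_enum.
elim=> [_|z l IH] /=.
  have -> : [set v in [::]] = set0 :> {set T} by apply/setP => v; rewrite !inE.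
  by rewrite setU0.
case/andP => zS' /IH Hl.
have -> : S :|: [set v in z :: l] = z |: (S :|: [set v in l]).
  by apply/setP => v; rewrite !inE orbCA.
case: (eqVneq z x) => [->|zx].
  by rewrite (setUidPr _); last by rewrite sub1set inE xS.
case: (eqVneq z y) => [->|zy].
  by rewrite (setUidPr _); last by rewrite sub1set inE yS.
apply: (CS_add (x := x) (y := y)) => //; rewrite ?inE ?xS ?yS ?(eq_sym x) ?(eq_sym y) //.
by apply: (elimT (CSbP S') HS') => //; rewrite eq_sym.
Qed.

Lemma CS_Alt : CSb [set: T] -> forall p : {perm T}, ~~ odd_perm p -> p \in G.
Proof.
move=> /CSbP H.
have H3 : forall a b c, a != b -> b != c -> a != c -> c3 a b c \in G.
  by move=> a b c; apply: H; rewrite inE.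
have pair : forall a b c d, a != b -> c != d -> tperm a b * tperm c d \in G.
  move=> a b c d ab cd.
  case: (eqVneq a c) => [eac|ac].
    subst c; case: (eqVneq b d) => [ebd|bd]; first by subst d; rewrite tperm2 group1.
    exact: H3.
  case: (eqVneq a d) => [ead|ad].
    subst d; rewrite (tpermC c a); case: (eqVneq b c) => [ebc|bc]; first by subst c; rewrite tperm2 group1.
    exact: H3.
  case: (eqVneq b c) => [ebc|bc].
    by subst c; rewrite tpermC; apply: H3; rewrite // eq_sym.
  case: (eqVneq b d) => [ebd|bd].
    by subst d; rewrite tpermC (tpermC c b); apply: H3; rewrite // eq_sym.
  have -> : tperm a b * tperm c d = c3 a b c * c3 c a d.
    by rewrite /c3 mulgA -(mulgA (tperm a b)) (tpermC c a) tperm2 mulg1.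
  by rewrite groupM // H3 // eq_sym.
move=> p; case: (prod_tpermP p) => ts -> dts; rewrite odd_perm_prod //.
have [n] := ubnP (size ts); elim: n ts dts => // n IH [|[a b] [|[c d] ts]] //=.
- by rewrite big_nil group1.
- move=> /andP[ab /andP[cd dts]] /ltnSE sz; rewrite negbK => odts.
  rewrite !big_cons mulgA groupM //; first exact: pair.
  apply: IH => //; first by apply: leq_ltn_trans sz.
Qed.

End CS.

Section Grow.
Variable T : finType.
Variable G : {group {perm T}}.

Lemma CS_grow (S0 : {set T}) : CSb G S0 -> #|T| + 2 <= 2 * #|S0| ->
  (forall A : {set T}, (forall (g : {perm T}) x, g \in G -> x \in A -> g x \in A) ->
     A != set0 -> A = setT) ->
  CSb G [set: T].
Proof.
move=> HS0 card0 closure.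
case: (@arg_maxnP _ S0 (CSb G) (fun S => #|S|) HS0) => S HS maxS.
have S0le : #|S0| <= #|S| by apply: maxS.
suff E : S = setT by rewrite -E.
apply: closure; last first.
  apply/set0Pn; apply/card_gt0P; apply: leq_trans S0le.
  move/leP: card0 => c0; apply/leP; rewrite -?plusE -?multE in c0 *; lia.
move=> g x gG xS.
pose gS := [set g y | y in S].
have HgS : CSb G gS.
  apply/CSbP => a b c /imsetP[a' a'S ->] /imsetP[b' b'S ->] /imsetP[c' c'S ->] ab bc ac.
  rewrite -c3J groupJ //; apply: (elimT (CSbP G S) HS) => //.
  - by apply: contraNneq ab => ->.
  - by apply: contraNneq bc => ->.
  - by apply: contraNneq ac => ->.
have cgS : #|gS| = #|S| by rewrite card_imset //; apply: perm_inj.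
have h1 := cardsUI S gS; rewrite cgS in h1.
have h2 : #|S :|: gS| <= #|T| by apply: max_card.
have inter : 1 < #|S :&: gS|.
  move/leP: h2 => h2; move/leP: S0le => h3; move/leP: card0 => h4; apply/leP.
  rewrite -?plusE -?multE in h1 h2 h3 h4 *; lia.
case/card_gt1P: inter => u [v [uI vI uv]].
have HU := CS_union HS HgS uI vI uv.
have le := maxS _ HU.
have E : S :|: gS = S.
  by apply/eqP; rewrite eq_sym eqEcard subsetUl.
by rewrite -E inE; apply/orP; right; apply: imset_f.
Qed.

End Grow.

Section Gen.
Variable r : nat.
Variable Y : lgraph r.
Variable sigma : 'I_r -> {perm vert Y}.

Definition MG := (<<[set sigma i | i : 'I_r]>>)%G.

Lemma sigma_MG i : sigma i \in MG.
Proof. by apply: mem_gen; apply: imset_f. Qed.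

Lemma adj_lifts u v : lifts sigma -> adj u v -> exists i, sigma i u = v \/ sigma i v = u.
Proof.
move=> L /existsP[e /orP[/andP[/eqP su /eqP tv]|/andP[/eqP sv /eqP tu]]].
  by exists (lab e); left; rewrite -su -tv L.
by exists (lab e); right; rewrite -sv -tu L.
Qed.

Lemma closure_conn : connected Y -> lifts sigma ->
  forall A : {set vert Y}, (forall (g : {perm vert Y}) x, g \in MG -> x \in A -> g x \in A) ->
     A != set0 -> A = setT.
Proof.
move=> C L A cl /set0Pn[x0 x0A]; apply/setP => v; rewrite inE.
case/connectP: (C x0 v) => p; elim: p x0 x0A => [|w p IH] x0 x0A /=; first by move=> _ ->.
case/andP => /(adj_lifts L)[i [E|E]] pth lst.
  by apply: (IH w) => //; rewrite -E cl // sigma_MG.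
apply: (IH w) => //.
have -> : w = (sigma i)^-1 x0 by rewrite -E permK.
by apply: cl => //; rewrite groupV sigma_MG.
Qed.

Lemma monodromy_Alt : (forall i, ~~ odd_perm (sigma i)) -> CSb MG [set: vert Y] ->
  monodromy sigma = ('Alt_(vert Y))%g.
Proof.
move=> ev HC; apply/eqP; rewrite eqEsubset; apply/andP; split.
  rewrite /monodromy gen_subG; apply/subsetP => g /imsetP[i _ ->].
  by rewrite Alt_even.
by apply/subsetP => g; rewrite Alt_even => /(CS_Alt HC).
Qed.

End Gen.

Lemma extend_pinj (T : finType) (f : T -> option T) :
  (forall x y z, f x = Some z -> f y = Some z -> x = y) ->
  {s : {perm T} | forall x z, f x = Some z -> s x = z}.
Proof.
move=> finj.
pose A := [set x | f x == None].
pose B := [set z | [forall x, f x != Some z]].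
pose g x := odflt x (f x).
have gD : {in ~: A &, injective g}.
  move=> x y; rewrite !inE /g; case Ex: (f x) => [zx|] //; case Ey: (f y) => [zy|] //= _ _ E.
  by subst zy; apply: (finj _ _ zx).
have IB : (~: B) = g @: (~: A).
  apply/setP => z; rewrite !inE negb_forall; apply/existsP/imsetP.
    case=> x; rewrite negbK => /eqP Ex; exists x; first by rewrite !inE Ex.
    by rewrite /g Ex.
  case=> x; rewrite !inE /g; case Ex: (f x) => [zx|] //= _ ->.
  by exists x; rewrite Ex eqxx.
have cAB : #|A| = #|B|.
  have c1 := cardsC A; have c2 := cardsC B.
  rewrite IB card_in_imset // in c2.
  move: c1 c2; rewrite -?plusE; lia.
pose h x := nth x (enum B) (index x (enum A)).
have hB : forall x, x \in A -> h x \in B.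
  move=> x xA; rewrite -mem_enum; apply: mem_nth.
  by rewrite -cardE -cAB cardE index_mem mem_enum.
pose F x := if f x is Some z then z else h x.
have Finj : injective F.
  move=> x y; rewrite /F.
  have noB : forall u z, f u = Some z -> z \notin B.
    move=> u z Eu; rewrite inE negb_forall; apply/existsP; exists u; by rewrite Eu negbK.
  case Ex: (f x) => [zx|]; case Ey: (f y) => [zy|].
  - by move=> E; subst zy; apply: (finj _ _ zx).
  - move=> E; have := hB y; rewrite inE Ey eqxx -E => /(_ isT).
    by rewrite (negbTE (noB _ _ Ex)).
  - move=> E; have := hB x; rewrite inE Ex eqxx E => /(_ isT).
    by rewrite (negbTE (noB _ _ Ey)).
  - move=> E.
    have xA : x \in enum A by rewrite mem_enum inE Ex.
    have yA : y \in enum A by rewrite mem_enum inE Ey.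
    have ix : index x (enum A) < size (enum B) by rewrite -cardE -cAB cardE index_mem.
    have iy : index y (enum A) < size (enum B) by rewrite -cardE -cAB cardE index_mem.
    move: E; rewrite /h (set_nth_default y) // => /eqP.
    rewrite nth_uniq ?enum_uniq // => /eqP E.
    by rewrite -(nth_index x xA) E nth_index.
exists (perm Finj) => x z Ex; by rewrite permE /F Ex.
Qed.

Lemma odd_permX (T : finType) (s : {perm T}) n : odd_perm (s ^+ n) = odd n && odd_perm s.
Proof.
elim: n => [|n IH]; first by rewrite expg0 odd_perm1.
by rewrite expgS odd_permM IH /=; case: (odd n); case: (odd_perm s).
Qed.

Section Constr.
Variables (r : nat) (Z : lgraph r).
Local Notation VZ := (vert Z).
Variable zeta : 'I_r -> {perm VZ}.
Hypothesis zetaE : forall e, zeta (lab e) (src e) = tgt e.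
Variables (i0 j : 'I_r).
Hypothesis ji0 : j != i0.
Variable b : VZ.
Hypothesis bfree : forall e, lab e = i0 -> tgt e != b.
Variable q : nat.
Hypothesis q_gt1 : 1 < q.
Hypothesis q_odd : odd q.

Let q_pos : 0 < q. Proof. exact: ltnW. Qed.

Definition V : finType := ((VZ + VZ) + 'I_q)%type.
Definition c1 (v : VZ) : V := inl (inl v).
Definition c2 (v : VZ) : V := inl (inr v).
Definition wv (i : 'I_q) : V := inr i.

Definition Dfun (z : {perm VZ}) (x : V) : V :=
  match x with
  | inl (inl v) => c1 (z v)
  | inl (inr v) => c2 (z v)
  | inr i => inr i
  end.

Lemma Dinj z : injective (Dfun z).
Proof.
by move=> [[x|x]|x] [[y|y]|y] //= [] // /perm_inj ->.
Qed.

Definition D z : {perm V} := perm (@Dinj z).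

Lemma D1 z v : D z (c1 v) = c1 (z v). Proof. by rewrite permE. Qed.
Lemma D2 z v : D z (c2 v) = c2 (z v). Proof. by rewrite permE. Qed.
Lemma Dw z i : D z (wv i) = wv i. Proof. by rewrite permE. Qed.

Definition rotk (k : nat) (i : 'I_q) : 'I_q := Ordinal (ltn_pmod (i + k) q_pos).

Lemma rotk_inj k : injective (rotk k).
Proof.
move=> x y /(congr1 val) /= /eqP; rewrite eqn_modDr !modn_small ?ltn_ord //.
by move/eqP/val_inj.
Qed.

Definition Ufun (x : V) : V := if x is inr i then inr (rotk 1 i) else x.

Lemma Uinj : injective Ufun.
Proof. by move=> [x|x] [y|y] //= [] /eqP; rewrite eqn_modDr !modn_small ?ltn_ord // => /eqP/val_inj ->. Qed.

Definition U : {perm V} := perm Uinj.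

Lemma Uw i : U (wv i) = wv (rotk 1 i). Proof. by rewrite permE. Qed.
Lemma U1 v : U (c1 v) = c1 v. Proof. by rewrite permE. Qed.
Lemma U2 v : U (c2 v) = c2 v. Proof. by rewrite permE. Qed.

Lemma UXw k i : (U ^+ k) (wv i) = wv (rotk k i).
Proof.
elim: k => [|k IH].
  by rewrite expg0 perm1; congr wv; apply: val_inj; rewrite /= addn0 modn_small.
rewrite expgSr permM IH Uw; congr wv; apply: val_inj => /=.
by rewrite modnDml -addnA addn1.
Qed.

Lemma UX1 k v : (U ^+ k) (c1 v) = c1 v.
Proof. by elim: k => [|k IH]; rewrite ?expg0 ?perm1 // expgSr permM IH U1. Qed.
Lemma UX2 k v : (U ^+ k) (c2 v) = c2 v.
Proof. by elim: k => [|k IH]; rewrite ?expg0 ?perm1 // expgSr permM IH U2. Qed.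

Lemma Uq : U ^+ q = 1.
Proof.
apply/permP => -[[v|v]|i]; rewrite perm1; first exact: UX1; first exact: UX2.
rewrite UXw; congr wv; apply: val_inj; by rewrite /= modnDr modn_small.
Qed.

Lemma U_even : ~~ odd_perm U.
Proof.
have := odd_permX U q; rewrite Uq odd_perm1 q_odd /=.
by move=> <-.
Qed.

Definition w0 : 'I_q := Ordinal q_pos.
Definition w1 : 'I_q := Ordinal q_gt1.

Definition sg : {perm V} := c3 (c1 b) (c2 b) (wv w1).

Lemma sgE x : sg x = if x == c1 b then c2 b else if x == c2 b then wv w1
                     else if x == wv w1 then c1 b else x.
Proof. by rewrite /sg c3E. Qed.

Definition sig (i : 'I_r) : {perm V} :=
  D (zeta i) * (if i == j then U else 1) * (if i == i0 then sg else 1).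

Lemma sigE i x : sig i x =
  (if i == i0 then sg else 1) ((if i == j then U else 1) (D (zeta i) x)).
Proof. by rewrite /sig !permM. Qed.

Lemma c1_inj : injective c1. Proof. by move=> x y []. Qed.
Lemma c2_inj : injective c2. Proof. by move=> x y []. Qed.

Lemma c12 x y : (c1 x == c2 y) = false. Proof. by apply/eqP. Qed.
Lemma c21 x y : (c2 x == c1 y) = false. Proof. by apply/eqP. Qed.
Lemma c1w x y : (c1 x == wv y) = false. Proof. by apply/eqP. Qed.
Lemma wc1 x y : (wv x == c1 y) = false. Proof. by apply/eqP. Qed.
Lemma c2w x y : (c2 x == wv y) = false. Proof. by apply/eqP. Qed.
Lemma wc2 x y : (wv x == c2 y) = false. Proof. by apply/eqP. Qed.

Lemma DM z1 z2 : D (z1 * z2) = D z1 * D z2.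
Proof. by apply/permP => -[[v|v]|i]; rewrite permM !permE //= permM. Qed.

Lemma Done : D 1 = 1.
Proof. by apply/permP => -[[v|v]|i]; rewrite !permE //= perm1. Qed.

Lemma Dtperm a a' : D (tperm a a') = tperm (c1 a) (c1 a') * tperm (c2 a) (c2 a').
Proof.
apply/permP => -[[v|v]|i]; rewrite permM.
- change (inl (inl v)) with (c1 v).
  by rewrite D1 -(@inj_tperm _ _ c1 a a' v c1_inj) (@tpermD _ (c2 a) (c2 a')) // ?c21.
- change (inl (inr v)) with (c2 v).
  by rewrite D2 (@tpermD _ (c1 a) (c1 a')) ?c12 // (@inj_tperm _ _ c2 a a' v c2_inj).
- change (inr i) with (wv i).
  by rewrite Dw !tpermD // ?c1w ?c2w.
Qed.

Lemma D_even z : ~~ odd_perm (D z).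
Proof.
case: (prod_tpermP z) => ts -> _.
elim: ts => [|t ts IH]; first by rewrite big_nil Done odd_perm1.
rewrite big_cons DM odd_permM Dtperm odd_permM !odd_tperm.
by rewrite (inj_eq c1_inj) (inj_eq c2_inj) addbb /= (negbTE IH).
Qed.

Lemma sg_even : ~~ odd_perm sg.
Proof. by rewrite /sg /c3 odd_permM !odd_tperm. Qed.

Lemma sig_even i : ~~ odd_perm (sig i).
Proof.
rewrite /sig !odd_permM (negbTE (D_even _)).
case: (i == j); rewrite ?(negbTE U_even) ?odd_perm1 /=;
case: (i == i0); by rewrite ?(negbTE sg_even) ?odd_perm1.
Qed.

Definition Y : lgraph r :=
  @LGraph r V ('I_r * V)%type (fun e => e.2) (fun e => sig e.1 e.2) (fun e => e.1).

Definition fE (e : edge Z) : edge Y := (lab e, c1 (src e)).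

Lemma Y_emb : immersion Z -> subgraph_embedding (Y := Y) c1 fE.
Proof.
move=> imm; split => //.
- exact: c1_inj.
- move=> e e' [] El Es.
  case: (imm (src e) (lab e)) => /card_le1_eqP H _.
  apply: H; rewrite !inE -?Es -?El ?eqxx //.
- move=> e; rewrite /= sigE D1 zetaE.
  have -> : (if lab e == j then U else 1) (c1 (tgt e)) = c1 (tgt e).
    by case: ifP; rewrite ?U1 ?perm1.
  case: ifP => [/eqP li0|]; last by rewrite perm1.
  by rewrite sgE (inj_eq c1_inj) (negbTE (bfree li0)).
Qed.

Lemma Y_cov : covering Y.
Proof.
move=> v i; split.
  have -> : out_edges v i = [set (i, v)].
    by apply/setP => -[k x]; rewrite !inE /= xpair_eqE andbC.
  by rewrite cards1.
have -> : in_edges v i = [set (i, (sig i)^-1 v)].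
  apply/setP => -[k x]; rewrite !inE /= xpair_eqE.
  case: (eqVneq k i) => [->|] /=; last by rewrite andbF.
  by rewrite andbT (canF_eq (permK (sig i))).
by rewrite cards1.
Qed.

Lemma Y_lifts : lifts (G := Y) sig.
Proof. by []. Qed.

Lemma adjY_sig i x : adj (G := Y) x (sig i x).
Proof. by apply/existsP; exists (i, x); rewrite /= !eqxx. Qed.

Lemma adj_sym (R : nat) (H : lgraph R) : symmetric (adj (G := H)).
Proof.
move=> x y; apply/existsP/existsP => -[e He]; exists e; by rewrite orbC.
Qed.

Lemma connect_map (T1 T2 : finType) (e1 : rel T1) (e2 : rel T2) (f : T1 -> T2) :
  (forall x y, e1 x y -> e2 (f x) (f y)) -> forall x y, connect e1 x y -> connect e2 (f x) (f y).
Proof.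
move=> H x y /connectP[p]; elim: p x => [|z p IH] x /=; first by move=> _ ->.
case/andP => exz pz lz.
exact: connect_trans (connect1 (H _ _ exz)) (IH _ pz lz).
Qed.

Lemma sg_fix x : x != c1 b -> x != c2 b -> x != wv w1 -> sg x = x.
Proof. by move=> h1 h2 h3; rewrite sgE (negbTE h1) (negbTE h2) (negbTE h3). Qed.

Lemma sig_c1 i v : sig i (c1 v) =
  (if i == i0 then sg else 1) (c1 (zeta i v)).
Proof. by rewrite sigE D1; case: (i == j); rewrite ?U1 ?perm1. Qed.

Lemma sig_c2 i v : sig i (c2 v) =
  (if i == i0 then sg else 1) (c2 (zeta i v)).
Proof. by rewrite sigE D2; case: (i == j); rewrite ?U2 ?perm1. Qed.

Lemma sig_edge1 (e : edge Z) : sig (lab e) (c1 (src e)) = c1 (tgt e).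
Proof.
rewrite sig_c1 zetaE; case: ifP => [/eqP li0|]; rewrite ?perm1 //.
by apply: sg_fix; rewrite ?c1w ?c12 // (inj_eq c1_inj) bfree.
Qed.

Lemma sig_edge2 (e : edge Z) : sig (lab e) (c2 (src e)) = c2 (tgt e).
Proof.
rewrite sig_c2 zetaE; case: ifP => [/eqP li0|]; rewrite ?perm1 //.
by apply: sg_fix; rewrite ?c2w ?c21 // (inj_eq c2_inj) bfree.
Qed.

Lemma conn_c1 : connected Z -> forall u v, connect (adj (G := Y)) (c1 u) (c1 v).
Proof.
move=> CZ u v; apply: connect_map (CZ u v) => x y /existsP[e /orP[]] /andP[/eqP<- /eqP<-].
  by rewrite -sig_edge1 adjY_sig.
by rewrite adj_sym -sig_edge1 adjY_sig.
Qed.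

Lemma conn_c2 : connected Z -> forall u v, connect (adj (G := Y)) (c2 u) (c2 v).
Proof.
move=> CZ u v; apply: connect_map (CZ u v) => x y /existsP[e /orP[]] /andP[/eqP<- /eqP<-].
  by rewrite -sig_edge2 adjY_sig.
by rewrite adj_sym -sig_edge2 adjY_sig.
Qed.

Lemma rotk_S k i : rotk 1 (rotk k i) = rotk k.+1 i.
Proof. by apply: val_inj => /=; rewrite modnDml -addnA addn1. Qed.

Lemma sig_jw i : sig j (wv i) = wv (rotk 1 i).
Proof.
by rewrite sigE Dw eqxx Uw (negbTE ji0) perm1.
Qed.

Lemma conn_w i : connect (adj (G := Y)) (wv w0) (wv i).
Proof.
have -> : i = rotk i w0 by apply: val_inj; rewrite /= add0n modn_small.
elim: (nat_of_ord i) => [|k IH].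
  by have -> : rotk 0 w0 = w0 by apply: val_inj; rewrite /= modn_small.
by apply: connect_trans IH _; rewrite -rotk_S -sig_jw connect1 // adjY_sig.
Qed.

Lemma Y_conn : connected Z -> connected Y.
Proof.
move=> CZ.
pose a := (zeta i0)^-1 b.
have za : zeta i0 a = b by rewrite permKV.
have i0j : (i0 == j) = false by rewrite eq_sym (negbTE ji0).
have e1 : adj (G := Y) (c1 a) (c2 b).
  by have := adjY_sig i0 (c1 a); rewrite sig_c1 za eqxx sgE eqxx.
have e2 : adj (G := Y) (c2 a) (wv w1).
  have := adjY_sig i0 (c2 a); rewrite sig_c2 za eqxx sgE c21 eqxx.
  by [].
have e3 : connect (adj (G := Y)) (wv w0) (wv w1) := conn_w w1.
have all : forall x, connect (adj (G := Y)) (c1 a) x.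
  have ab : connect (adj (G := Y)) (c1 a) (c2 b) by apply: connect1.
  have aw : connect (adj (G := Y)) (c1 a) (wv w0).
    apply: connect_trans ab _; apply: connect_trans (conn_c2 CZ b a) _.
    apply: connect_trans (connect1 e2) _.
    by rewrite (sym_connect_sym (@adj_sym _ Y)).
  move=> [[v|v]|i].
  - exact: conn_c1.
  - by apply: connect_trans ab _; apply: conn_c2.
  - by apply: connect_trans aw _; apply: conn_w.
move=> x y; apply: connect_trans (all y).
by rewrite (sym_connect_sym (@adj_sym _ Y)).
Qed.

Lemma DX z k : D (z ^+ k) = (D z) ^+ k.
Proof. by elim: k => [|k IH]; rewrite ?expg0 ?Done // !expgS DM IH. Qed.

Lemma DU_comm z : commute (D z) U.
Proof.
apply/permP => -[[v|v]|i]; rewrite !permM.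
- change (inl (inl v)) with (c1 v); by rewrite D1 !U1 D1.
- change (inl (inr v)) with (c2 v); by rewrite D2 !U2 D2.
- change (inr i) with (wv i); by rewrite Dw !Uw Dw.
Qed.

Lemma DUX z k : (D z * U) ^+ k = D (z ^+ k) * U ^+ k.
Proof.
elim: k => [|k IH]; first by rewrite !expg0 Done mulg1.
rewrite !expgS IH DM -!mulgA; congr (_ * _).
by rewrite !mulgA (DU_comm (z ^+ k)).
Qed.

Hypothesis q_cop : coprime q #[zeta j].

Local Notation G := (MG (Y := Y) sig).

Lemma U_in : U \in G.
Proof.
have sj : sig j = D (zeta j) * U by rewrite /sig eqxx (negbTE ji0) mulg1.
set N := #[zeta j].
have UN : U ^+ N \in G.
  have E : sig j ^+ N = U ^+ N by rewrite sj DUX expg_order Done mul1g.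
  have := groupX N (sigma_MG (Y := Y) sig j).
  suff <- : (sig j ^+ N : {perm vert Y}) = U ^+ N by [].
  exact: E.
have cop : coprime #|<[U]>| N.
  apply: coprime_dvdl q_cop.
  by rewrite order_dvdn Uq.
rewrite -(expgK cop (cycle_id U)).
exact: groupX.
Qed.

Lemma Uinv_fix x : U x = x -> U^-1 x = x.
Proof. by move=> E; rewrite -{1}E permK. Qed.

Lemma Uinv_w i : U^-1 (wv (rotk 1 i)) = wv i.
Proof. by rewrite -Uw permK. Qed.

Lemma w01 : rotk 1 w0 = w1.
Proof. by apply: val_inj; rewrite /= add0n modn_small. Qed.

Lemma w0w1 : (w0 == w1) = false.
Proof. by []. Qed.

Lemma wv_eq i k : (wv i == wv k) = (i == k).
Proof. by apply/eqP/eqP => [[]|->]. Qed.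

Lemma t_eq : (U ^ sig i0) * U^-1 = c3 (c1 b) (wv w1) (wv w0).
Proof.
have s0 : sig i0 = D (zeta i0) * sg.
  by rewrite /sig eqxx eq_sym (negbTE ji0) mulg1.
apply/permP => x; rewrite -(permKV (sig i0) x); set y := (sig i0)^-1 x.
rewrite permM permJ c3E ?c1w ?wv_eq ?w0w1 //.
case: y => [[v|v]|i].
- change (inl (inl v)) with (c1 v); rewrite U1 s0 !(permM (D (zeta i0)) sg) D1.
  case: (eqVneq (zeta i0 v) b) => [->|zb].
    by rewrite sgE eqxx Uinv_fix ?U2 // c21 !c2w.
  rewrite sg_fix ?c12 ?c1w ?(inj_eq c1_inj) //.
  by rewrite Uinv_fix ?U1 // (negbTE zb).
- change (inl (inr v)) with (c2 v); rewrite U2 s0 !(permM (D (zeta i0)) sg) D2.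
  case: (eqVneq (zeta i0 v) b) => [->|zb].
    by rewrite sgE c21 eqxx -w01 Uinv_w w01 wc1 eqxx.
  rewrite sg_fix ?c21 ?c2w ?(inj_eq c2_inj) //.
  by rewrite Uinv_fix ?U2 // c21 !c2w.
- change (inr i) with (wv i); rewrite Uw s0 !(permM (D (zeta i0)) sg) !Dw.
  case: (eqVneq (rotk 1 i) w1) => [Ei|Ei].
    have -> : i = w0 by apply: (@rotk_inj 1); rewrite Ei w01.
    rewrite w01 sgE wc1 wc2 eqxx Uinv_fix ?U1 //.
    by rewrite (@sg_fix (wv w0)) ?wc1 ?wc2 ?wv_eq ?w0w1 ?eqxx.
  rewrite sg_fix ?wc1 ?wc2 ?wv_eq ?(negbTE Ei) // Uinv_w.
  case: (eqVneq i w1) => [->|iw1]; first by rewrite sgE wc1 wc2 eqxx eqxx.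
  have iw0 : i != w0 by apply: contraNneq Ei => ->; rewrite w01.
  by rewrite (@sg_fix (wv i)) ?wc1 ?wc2 ?wv_eq ?(negbTE iw1) ?(negbTE iw0).
Qed.

Lemma t_in : c3 (c1 b) (wv w1) (wv w0) \in G.
Proof.
rewrite -t_eq; apply: groupM.
  by apply: groupJ; [exact: U_in | exact: (sigma_MG (Y := Y) sig i0)].
by apply: groupVr; exact: U_in.
Qed.

Lemma rotk_val k : k < q -> nat_of_ord (rotk k w0) = k.
Proof. by move=> kq; rewrite /= add0n modn_small. Qed.

Lemma Tk k : c3 (c1 b) (wv (rotk k.+1 w0)) (wv (rotk k w0)) \in G.
Proof.
have := groupJ t_in (groupX k U_in).
rewrite c3J UX1 !UXw.
have -> : rotk k w1 = rotk k.+1 w0 by apply: val_inj; rewrite /= add1n add0n.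
by [].
Qed.

Definition Sk (k : nat) : {set V} :=
  [set x : V | match x with inl (inl v) => v == b | inl (inr _) => false | inr i => i <= k end].

Lemma CS_S0 : CSb G (Sk 0).
Proof.
have H : forall x, x \in Sk 0 -> x = c1 b \/ x = wv w0.
  move=> [[v|v]|i]; rewrite inE // => h.
  - by left; rewrite (eqP h).
  - by right; congr inr; apply: val_inj; rewrite /=; move: h; rewrite leqn0 => /eqP.
apply/CSbP => x y z /H[]-> /H[]-> /H[]->; by rewrite ?eqxx ?andbF.
Qed.

Lemma CS_Sk k : k < q -> CSb G (Sk k).
Proof.
elim: k => [_|k IH kq]; first exact: CS_S0.
have kq' : k < q by apply: ltnW.
set y := wv (rotk k w0); set z := wv (rotk k.+1 w0).
have -> : Sk k.+1 = z |: Sk k.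
  apply/setP => -[[v|v]|i]; rewrite !inE //.
  change (inr i) with (wv i); rewrite /z wv_eq.
  rewrite leq_eqVlt ltnS; congr (_ || _).
  by apply/eqP/eqP => E; [apply: val_inj => /=; rewrite E add0n modn_small | rewrite E /= add0n modn_small].
have yz : y != z.
  by rewrite /y /z wv_eq; apply/eqP => /(congr1 (@nat_of_ord q)); rewrite !rotk_val // => /n_Sn.
have xy : c1 b != y by rewrite c1w.
have xz : c1 b != z by rewrite c1w.
apply: (CS_add (x := c1 b) (y := y)) => //.
- by apply: IH.
- by rewrite /c1 inE /= eqxx.
- by rewrite /y /wv inE /= add0n modn_small.
apply: (@Tm_rot _ _ z (c1 b) y); rewrite ?(eq_sym z) //.
apply: (@Tm_swap _ _ (c1 b) z y) => //; first by rewrite eq_sym.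
exact: Tk.
Qed.

Hypothesis q_big : 2 * #|VZ| <= q.

Lemma wv_inj : injective wv. Proof. by move=> x y []. Qed.

Lemma card_S : #|Sk q.-1| = q.+1.
Proof.
have -> : Sk q.-1 = c1 b |: (wv @: [set: 'I_q]).
  apply/setP => -[[v|v]|i]; rewrite !inE.
  - change (inl (inl v)) with (c1 v); rewrite (inj_eq c1_inj).
    have -> : (c1 v \in wv @: [set: 'I_q]) = false.
      by apply/negbTE/negP => /imsetP[k _].
    by rewrite orbF.
  - change (inl (inr v)) with (c2 v); rewrite c21.
    have -> : (c2 v \in wv @: [set: 'I_q]) = false.
      by apply/negbTE/negP => /imsetP[k _].
    by [].
  - rewrite -ltnS prednK // ltn_ord.
    by change (inr i) with (wv i); rewrite imset_f ?orbT.
rewrite cardsU1 card_imset; last exact: wv_inj.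
rewrite cardsT card_ord.
have -> : (c1 b \notin wv @: [set: 'I_q]) = true.
  by apply/negP => /imsetP[i _].
by rewrite add1n.
Qed.

Lemma CS_all : connected Z -> CSb G [set: vert Y].
Proof.
move=> CZ.
apply: (CS_grow (S0 := Sk q.-1)).
- by apply: CS_Sk; rewrite prednK.
- have -> : #|vert Y| = #|VZ| + #|VZ| + q.
    by rewrite -[#|vert Y|]/#|V| /V !card_sum card_ord.
  rewrite card_S; move/leP: q_big => h; apply/leP.
  rewrite -?plusE -?multE in h *; lia.
- exact: closure_conn (Y_conn CZ) Y_lifts.
Qed.

Lemma Y_alt : connected Z -> monodromy (G := Y) sig = ('Alt_(vert Y))%g.
Proof.
move=> CZ; apply: monodromy_Alt; first exact: sig_even.
exact: CS_all.
Qed.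

End Constr.

Close Scope group_scope.


Theorem lemma3p3 (r : nat) (Z : lgraph r) :
  2 <= r ->
  0 < #|vert Z| ->
  connected Z ->
  immersion Z ->
  ~ covering Z ->
  exists (Y : lgraph r) (fV : vert Z -> vert Y) (fE : edge Z -> edge Y)
         (sigma : 'I_r -> {perm vert Y}),
    [/\ subgraph_embedding fV fE,
        connected Y,
        covering Y,
        lifts sigma
      & monodromy sigma = ('Alt_(vert Y))%g].
Proof.
move=> r2 n0 CZ imm ncov.
pose f (i : 'I_r) (v : vert Z) : option (vert Z) :=
  if [pick e | (src e == v) && (lab e == i)] is Some e then Some (tgt e) else None.
have finj : forall i x y z, f i x = Some z -> f i y = Some z -> x = y.
  move=> i x y z; rewrite /f.
  case: pickP => [e /andP[/eqP sx /eqP li]|] //; case: pickP => [e' /andP[/eqP sy /eqP li']|] // [] E1 [] E2.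
  have ee : e = e'.
    case: (imm z i) => _ /card_le1_eqP H.
    by apply: H; rewrite inE ?E1 ?E2 ?li ?li' !eqxx.
  by rewrite -sx -sy ee.
pose zeta i := sval (extend_pinj (finj i)).
have zetaS : forall i x z, f i x = Some z -> zeta i x = z.
  move=> i; exact: (svalP (extend_pinj (finj i))).
have zetaE : forall e, zeta (lab e) (src e) = tgt e.
  move=> e; apply: zetaS; rewrite /f; case: pickP => [e' /andP[/eqP se /eqP le]|].
    have -> // : e' = e.
    case: (imm (src e) (lab e)) => /card_le1_eqP H _.
    by apply: H; rewrite inE ?se ?le !eqxx.
  by move=> /(_ e); rewrite !eqxx.
have [v [i0 Hv]] : exists (v : vert Z) (i : 'I_r), ~~ ((#|out_edges v i| == 1) && (#|in_edges v i| == 1)).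
  case: (boolP [exists v : vert Z, exists i : 'I_r, ~~ ((#|out_edges v i| == 1) && (#|in_edges v i| == 1))]).
    by case/existsP => v /existsP[i H]; exists v, i.
  move/existsPn => H; exfalso; apply: ncov => v i.
  by move: (H v) => /existsPn/(_ i); rewrite negbK => /andP[/eqP-> /eqP->].
have [b bfree] : exists b : vert Z, forall e : edge Z, lab e = i0 -> tgt e != b.
  case: (imm v i0) => ho hi.
  case: (eqVneq #|in_edges v i0| 0) => [/eqP hin|hin].
    exists v => e le; apply/eqP => te.
    move: hin; rewrite cards_eq0 => /eqP/setP/(_ e); rewrite !inE te le !eqxx.
    by [].
  have hout : #|out_edges v i0| == 0.
    move: Hv hin ho hi; case: #|out_edges v i0| => [|[|k]] //; case: #|in_edges v i0| => [|[|l]] //.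
  exists (zeta i0 v) => e le; apply/eqP => te.
  have sv : src e = v.
    by apply: (@perm_inj _ (zeta i0)); rewrite -te -le zetaE.
  move: hout; rewrite cards_eq0 => /eqP/setP/(_ e); rewrite !inE sv le !eqxx.
  by [].
have [j ji0] : exists j : 'I_r, j != i0.
  case: (eqVneq (nat_of_ord i0) 0) => [h|h].
    exists (Ordinal r2); apply/eqP => /(congr1 (@nat_of_ord r)) /=; rewrite h.
    by [].
  have r0 : 0 < r by apply: ltnW.
  exists (Ordinal r0); apply/eqP => /(congr1 (@nat_of_ord r)) /= E.
  by move: h; rewrite -E eqxx.
pose n := #|vert Z|.
case: (prime_above (maxn (2 * n) #[zeta j]%g)) => q; rewrite gtn_max => /andP[qn qN] pq.
have q_gt1 : 1 < q by apply: prime_gt1.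
have q_odd : odd q.
  case: (even_prime pq) => // q2; move: qn; rewrite q2.
  move/leP => h; move/leP: n0 => h0; exfalso; rewrite /n -?multE in h h0; lia.
have q_cop : coprime q #[zeta j]%g.
  rewrite prime_coprime //; apply/negP => /(dvdn_leq (order_gt0 _)).
  by rewrite leqNgt qN.
have q_big : 2 * n <= q by apply: ltnW.
exists (Y zeta i0 j b q_gt1), (@c1 r Z q), (fE zeta i0 j b q_gt1), (sig zeta i0 j b q_gt1).
split.
- exact: Y_emb.
- exact: Y_conn.
- exact: Y_cov.
- exact: Y_lifts.
- exact: Y_alt.
Qed.
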